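(* Let $h:(\mathbb{R}^n,0)\to(\mathbb{R}^n,0)$ be a Lipschitz homeomorphism germ such that $c_1\|x\|\le\|h(x)\|\le c_2\|x\|$ for some constants $c_1,c_2>0$ and all $x$ in a neighbourhood of $0$. Then $h$ is an (SSP) map if and only if for every semiline $\ell$ the restriction $h|_\ell$ is an (SSP) map.
   Context: A semiline is a set $\{ta:t\ge0\}$ with $a\in S^{n-1}$. For a set-germ $A\subset\mathbb{R}^k$ at $0$ with $0\in\overline A$, $D(A)=\{a\in S^{k-1}:\exists\, x_i\in A\setminus\{0\},\ x_i\to0,\ x_i/\|x_i\|\to a\}$. For sequences, $\|u_m\|\ll\|v_m\|,\|w_m\|$ means $\|u_m\|/\|v_m\|\to0$ and $\|u_m\|/\|w_m\|\to0$. $A$ satisfies condition (SSP) if for every sequence $a_m\in\mathbb{R}^k$ tending to $0$ with $\lim a_m/\|a_m\|\in D(A)$ there is a sequence $b_m\in A$ with $\|a_m-b_m\|\ll\|a_m\|,\|b_m\|$. A map germ $f:(S,0)\to(\mathbb{R}^n,0)$ defined on a set $S\subset\mathbb{R}^n$ with $0\in\overline S$ is an (SSP) map if its graph $\{(x,f(x)):x\in S\}\subset\mathbb{R}^n\times\mathbb{R}^n$ satisfies condition (SSP) at $(0,0)$. *)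

(* Defs.v *)
From HB Require Import structures.
From mathcomp Require Import all_boot all_order all_algebra.
From mathcomp Require Import reals.
Set Implicit Arguments. Unset Strict Implicit. Unset Printing Implicit Defensive.
Import Order.TTheory GRing.Theory Num.Theory.
Local Open Scope ring_scope.

Section Defs.
Variable R : realType.

Definition enorm k (v : 'rV[R]_k) : R := Num.sqrt (\sum_(i < k) v 0 i ^+ 2).

Definition cvg0 k (u : nat -> 'rV[R]_k) : Prop :=
  forall e : R, 0 < e -> exists N, forall m, (N <= m)%N -> enorm (u m) < e.

Definition cvgto k (u : nat -> 'rV[R]_k) (a : 'rV[R]_k) : Prop :=
  cvg0 (fun m => u m - a).

(* ||u_m|| << ||v_m||, i.e. ||u_m|| / ||v_m|| -> 0 *)
Definition negl k (u v : nat -> 'rV[R]_k) : Prop :=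
  forall e : R, 0 < e -> exists N, forall m, (N <= m)%N ->
    enorm (u m) <= e * enorm (v m).

Definition sphere k (a : 'rV[R]_k) : Prop := enorm a = 1.

Definition dir k (x : 'rV[R]_k) : 'rV[R]_k := (enorm x)^-1 *: x.

Definition tangent_dirs k (A : 'rV[R]_k -> Prop) (a : 'rV[R]_k) : Prop :=
  sphere a /\
  exists x : nat -> 'rV[R]_k,
    (forall m, A (x m) /\ x m != 0) /\ cvg0 x /\ cvgto (fun m => dir (x m)) a.

Definition SSP k (A : 'rV[R]_k -> Prop) : Prop :=
  forall a : nat -> 'rV[R]_k, cvg0 a ->
    (exists d, tangent_dirs A d /\ cvgto (fun m => dir (a m)) d) ->
    exists b : nat -> 'rV[R]_k, (forall m, A (b m)) /\
      negl (fun m => a m - b m) a /\ negl (fun m => a m - b m) b.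

Definition graph n (S : 'rV[R]_n -> Prop) (f : 'rV[R]_n -> 'rV[R]_n) :
  'rV[R]_(n + n) -> Prop :=
  fun z => exists x, S x /\ z = row_mx x (f x).

Definition SSP_map n (S : 'rV[R]_n -> Prop) (f : 'rV[R]_n -> 'rV[R]_n) : Prop :=
  SSP (graph S f).

Definition semiline n (a : 'rV[R]_n) : 'rV[R]_n -> Prop :=
  fun x => exists t : R, 0 <= t /\ x = t *: a.

Definition ball0 n (r : R) : 'rV[R]_n -> Prop := fun x => enorm x < r.

Definition homeo_germ n (h : 'rV[R]_n -> 'rV[R]_n) : Prop :=
  h 0 = 0 /\
  exists r : R, 0 < r /\
    (forall x y, ball0 r x -> ball0 r y -> h x = h y -> x = y) /\
    (forall (u : nat -> 'rV[R]_n) x, (forall m, ball0 r (u m)) -> ball0 r x ->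
        cvgto u x -> cvgto (fun m => h (u m)) (h x)) /\
    (forall (u : nat -> 'rV[R]_n) x, (forall m, ball0 r (u m)) -> ball0 r x ->
        cvgto (fun m => h (u m)) (h x) -> cvgto u x) /\
    (forall x, ball0 r x -> exists e : R, 0 < e /\
        forall y, enorm (y - h x) < e -> exists x', ball0 r x' /\ h x' = y).

Definition lipschitz_germ n (h : 'rV[R]_n -> 'rV[R]_n) : Prop :=
  exists r L : R, 0 < r /\ forall x y, ball0 r x -> ball0 r y ->
    enorm (h x - h y) <= L * enorm (x - y).

End Defs.

(* Main.v *)
Require Import Defs.
From HB Require Import structures.
From mathcomp Require Import all_boot all_order all_algebra.
From mathcomp Require Import reals.
From mathcomp Require Import ring lra.
Set Implicit Arguments. Unset Strict Implicit. Unset Printing Implicit Defensive.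
Import Order.TTheory GRing.Theory Num.Theory.
Local Open Scope ring_scope.
Section N.
Variable R : realType.
Definition nsq k (x : 'rV[R]_k) := \sum_(i < k) x 0 i ^+ 2.
Lemma enormE k (x : 'rV[R]_k) : enorm x = Num.sqrt (nsq x). Proof. by []. Qed.

Lemma nsq_ge0 k (x : 'rV[R]_k) : 0 <= nsq x.
Proof. by rewrite /nsq; apply: sumr_ge0 => i _; rewrite sqr_ge0. Qed.

Lemma enorm_ge0 k (x : 'rV[R]_k) : 0 <= enorm x.
Proof. exact: sqrtr_ge0. Qed.

Lemma enorm_sq k (x : 'rV[R]_k) : enorm x ^+ 2 = nsq x.
Proof. by rewrite enormE sqr_sqrtr // nsq_ge0. Qed.

Lemma enorm_eq0 k (x : 'rV[R]_k) : enorm x = 0 -> x = 0.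
Proof.
move=> H; have : nsq x = 0 by rewrite -enorm_sq H expr0n.
move/eqP; rewrite /nsq psumr_eq0 => [|i _]; last by rewrite sqr_ge0.
move/allP=> Hall; apply/matrixP => i j; rewrite !mxE (ord1 i).
have := Hall j (mem_index_enum _); rewrite /= sqrf_eq0 => /eqP ->//.
Qed.

Lemma enorm0 k : enorm (0 : 'rV[R]_k) = 0.
Proof. by rewrite /enorm big1 ?sqrtr0 // => i _; rewrite mxE expr0n. Qed.

Lemma enormZ k c (x : 'rV[R]_k) : enorm (c *: x) = `|c| * enorm x.
Proof.
rewrite /enorm -sqrtr_sqr -sqrtrM ?sqr_ge0 // mulr_sumr; congr Num.sqrt.
by apply: eq_bigr => i _; rewrite mxE exprMn.
Qed.

Lemma enormN k (x : 'rV[R]_k) : enorm (- x) = enorm x.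
Proof. by rewrite -scaleN1r enormZ normrN normr1 mul1r. Qed.

Lemma dot_le k (x y : 'rV[R]_k) :
  \sum_(i < k) x 0 i * y 0 i <= enorm x * enorm y.
Proof.
set s := enorm x; set t := enorm y.
have hs : 0 <= s by apply: enorm_ge0.
have ht : 0 <= t by apply: enorm_ge0.
have E : \sum_(i < k) (t * x 0 i - s * y 0 i) ^+ 2 =
   t^+2 * nsq x + s^+2 * nsq y - (2 * t * s) * \sum_(i < k) x 0 i * y 0 i.
  rewrite /nsq !mulr_sumr -big_split /= -sumrB; apply: eq_bigr => i _; ring.
have H0 : 0 <= \sum_(i < k) (t * x 0 i - s * y 0 i) ^+ 2.
  by apply: sumr_ge0 => i _; rewrite sqr_ge0.
rewrite E -!enorm_sq -/s -/t in H0.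
have [s0|sp] := eqVneq s 0.
  have -> : x = 0 by apply: enorm_eq0.
  by rewrite s0 mul0r big1 // => i _; rewrite mxE mul0r.
have [t0|tp] := eqVneq t 0.
  have -> : y = 0 by apply: enorm_eq0.
  by rewrite t0 mulr0 big1 // => i _; rewrite mxE mulr0.
have sp' : 0 < s by rewrite lt_def sp hs.
have tp' : 0 < t by rewrite lt_def tp ht.
set D := \sum_(i < k) _ in H0 *.
have : (2 * t * s) * D <= (2 * t * s) * (s * t) by nra.
by rewrite ler_pM2l ?mulr_gt0.
Qed.

Lemma enormD k (x y : 'rV[R]_k) : enorm (x + y) <= enorm x + enorm y.
Proof.
rewrite -(ler_pXn2r (_ : 0 < 2)%N) ?nnegrE ?addr_ge0 ?enorm_ge0 //.
have E : enorm (x + y) ^+ 2 = enorm x ^+ 2 + enorm y ^+ 2 +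
    2 * \sum_(i < k) x 0 i * y 0 i.
  rewrite !enorm_sq /nsq mulr_sumr -!big_split /=; apply: eq_bigr => i _.
  rewrite mxE; ring.
rewrite E; have := dot_le x y; nra.
Qed.

Lemma enormB k (x y : 'rV[R]_k) : enorm x - enorm y <= enorm (x - y).
Proof.
have := enormD (x - y) y; rewrite subrK; lra.
Qed.

Lemma enorm_dist k (x y : 'rV[R]_k) : `|enorm x - enorm y| <= enorm (x - y).
Proof.
rewrite ler_norml enormB andbT; have := enormB y x.
have -> : enorm (y - x) = enorm (x - y) by rewrite -enormN opprB.
lra.
Qed.

Lemma nsq_row k (x y : 'rV[R]_k) :
  nsq (row_mx x y) = nsq x + nsq y.
Proof. by rewrite /nsq big_split_ord /=; congr (_ + _); apply: eq_bigr => i _;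
  rewrite ?row_mxEl ?row_mxEr. Qed.

Lemma enorm_rowl k (x y : 'rV[R]_k) : enorm x <= enorm (row_mx x y).
Proof.
rewrite -(ler_pXn2r (_ : 0 < 2)%N) ?nnegrE ?enorm_ge0 // !enorm_sq nsq_row.
by rewrite lerDl nsq_ge0.
Qed.

Lemma enorm_rowr k (x y : 'rV[R]_k) : enorm y <= enorm (row_mx x y).
Proof.
rewrite -(ler_pXn2r (_ : 0 < 2)%N) ?nnegrE ?enorm_ge0 // !enorm_sq nsq_row.
by rewrite lerDr nsq_ge0.
Qed.

Lemma enorm_row_le k (x y : 'rV[R]_k) : enorm (row_mx x y) <= enorm x + enorm y.
Proof.
have -> : row_mx x y = row_mx x 0 + row_mx 0 y by rewrite add_row_mx addr0 add0r.
apply: le_trans (enormD _ _) _.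
have E1 : enorm (row_mx x (0 : 'rV[R]_k)) = enorm x.
  by rewrite !enormE nsq_row [nsq 0]big1 ?addr0 // => i _; rewrite mxE expr0n.
have E2 : enorm (row_mx (0 : 'rV[R]_k) y) = enorm y.
  by rewrite !enormE nsq_row [nsq 0]big1 ?add0r // => i _; rewrite mxE expr0n.
by rewrite E1 E2.
Qed.

Lemma enorm_lsub k (v : 'rV[R]_(k + k)) : enorm (lsubmx v) <= enorm v.
Proof. by rewrite -{2}(hsubmxK v) enorm_rowl. Qed.

Lemma dirK k (x : 'rV[R]_k) : x = enorm x *: dir x.
Proof.
rewrite /dir scalerA; have [e0|e0] := eqVneq (enorm x) 0.
  by rewrite e0 mul0r scale0r; apply: enorm_eq0.
by rewrite divff // scale1r.
Qed.

Lemma enorm_dir k (x : 'rV[R]_k) : x != 0 -> enorm (dir x) = 1.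
Proof.
move=> nx; rewrite /dir enormZ ger0_norm ?invr_ge0 ?enorm_ge0 // mulVf //.
by apply: contra nx => /eqP /enorm_eq0 ->.
Qed.
End N.
Section S.
Variable R : realType.

Definition ev (P : nat -> Prop) := exists N, forall m, (N <= m)%N -> P m.

Lemma evA (P Q : nat -> Prop) : ev P -> ev Q -> ev (fun m => P m /\ Q m).
Proof.
move=> [N1 H1] [N2 H2]; exists (maxn N1 N2) => m Hm; split.
  by apply: H1; apply: leq_trans Hm; rewrite leq_maxl.
by apply: H2; apply: leq_trans Hm; rewrite leq_maxr.
Qed.

Lemma evW (P Q : nat -> Prop) : (forall m, P m -> Q m) -> ev P -> ev Q.
Proof. by move=> H [N HN]; exists N => m /HN /H. Qed.

Lemma ev_ex (P : nat -> Prop) : ev P -> exists m, P m.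
Proof. by move=> [N HN]; exists N; apply: HN. Qed.

Lemma cvg0_ev k (u : nat -> 'rV[R]_k) e : cvg0 u -> 0 < e -> ev (fun m => enorm (u m) < e).
Proof. by move=> H /H. Qed.

Lemma cvgto_ev k (u : nat -> 'rV[R]_k) a e : cvgto u a -> 0 < e ->
  ev (fun m => enorm (u m - a) < e).
Proof. by move=> H /H. Qed.

Lemma negl_ev k (u v : nat -> 'rV[R]_k) e : negl u v -> 0 < e ->
  ev (fun m => enorm (u m) <= e * enorm (v m)).
Proof. by move=> H /H. Qed.

Lemma zero_of_small (q : R) : 0 <= q -> (forall e, 0 < e -> q <= e) -> q = 0.
Proof.
move=> q0 H; apply/eqP; rewrite eq_le q0 andbT; rewrite leNgt; apply/negP => qp.
have := H (q / 2); rewrite divr_gt0 // => /(_ isT); lra.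
Qed.

Lemma negl_C k (u v : nat -> 'rV[R]_k) (C : R) : 0 < C ->
  (forall e, 0 < e -> ev (fun m => enorm (u m) <= C * e * enorm (v m))) -> negl u v.
Proof.
move=> C0 H e e0; apply: evW (H (e / C) (divr_gt0 e0 C0)) => m.
by rewrite [C * _]mulrC divfK ?gt_eqF.
Qed.

Lemma negl_swap k (a b : nat -> 'rV[R]_k) :
  negl (fun m => a m - b m) a -> negl (fun m => a m - b m) b.
Proof.
move=> H e e0.
have ee : 0 < e / (1 + e) by rewrite divr_gt0 // addr_gt0.
apply: evW (H _ ee) => m Hm.
set D := enorm (a m - b m) in Hm *; set A := enorm (a m) in Hm; set B := enorm (b m).
have tri : A <= D + B by rewrite /A /D /B; have := enormD (a m - b m) (b m); rewrite subrK.
have D0 : 0 <= D := enorm_ge0 _.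
set t := e / (1 + e) in Hm ee.
have te : t * (1 + e) = e by rewrite /t divfK // gt_eqF // addr_gt0.
have h1 : D <= t * (D + B) by apply: le_trans Hm _; rewrite ler_wpM2l // ltW.
have h2 : D * (1 + e) <= t * (1 + e) * (D + B) by nra.
rewrite te in h2; nra.
Qed.

Lemma negl_cvg0 k (z x : nat -> 'rV[R]_k) :
  negl (fun m => z m - x m) x -> cvg0 x -> cvg0 z.
Proof.
move=> Hn Hx e e0.
have h1 := Hn 1 ltr01. have h2 := Hx (e / 2) (divr_gt0 e0 (ltr0Sn _ 1)).
move: (evA h1 h2); apply: evW => m [H1 H2].
have := enormD (z m - x m) (x m); rewrite subrK; rewrite mul1r in H1; lra.
Qed.

Lemma para_bound k (w d1 : 'rV[R]_k) : d1 != 0 ->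
  enorm (enorm w *: dir d1 - w) <= 2 * enorm (w - d1).
Proof.
move=> nd.
have E : enorm w *: dir d1 - w = (enorm w - enorm d1) *: dir d1 + (d1 - w).
  by rewrite scalerBl -dirK; rewrite addrA subrK.
rewrite E; apply: le_trans (enormD _ _) _.
rewrite enormZ enorm_dir // mulr1.
have -> : enorm (d1 - w) = enorm (w - d1) by rewrite -enormN opprB.
have := enorm_dist w d1; lra.
Qed.

Lemma dir_close k (z x : nat -> 'rV[R]_k) d :
  (forall m, x m != 0) ->
  negl (fun m => z m - x m) x -> cvgto (fun m => dir (x m)) d ->
  cvgto (fun m => dir (z m)) d.
Proof.
move=> nx Hn Hd e e0.
have e2 : 0 < e / 2 by rewrite divr_gt0.
have ee : 0 < e / (e + 8) by rewrite divr_gt0 // addr_gt0.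
apply: evW (evA (Hn _ ee) (Hd _ e2)) => m [H1 H2].
set t := e / (e + 8) in H1 ee.
have te : t * (e + 8) = e by rewrite /t divfK // gt_eqF // addr_gt0.
set X := enorm (x m) in H1; set Z := enorm (z m); set D := enorm (z m - x m) in H1.
have X0 : 0 < X by rewrite lt_def enorm_ge0 andbT; apply/eqP => /enorm_eq0 /eqP; rewrite (negbTE (nx m)).
have D0 : 0 <= D := enorm_ge0 _.
have tri : X <= D + Z.
  have := enormD (z m - x m) (-(z m)); rewrite addrAC subrr add0r enormN enormN //.
have t1 : t < 1 by rewrite /t ltr_pdivrMr ?addr_gt0 // mul1r ltrDl.
have Zp : (1 - t) * X <= Z by nra.
have Z0 : 0 < Z by nra.
have key : Z * enorm (dir (z m) - dir (x m)) <= 2 * D.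
  rewrite -[Z]ger0_norm ?enorm_ge0 // -enormZ scalerBr.
  have -> : Z *: dir (z m) = z m by rewrite [in RHS](dirK (z m)).
  have -> : Z *: dir (x m) = (Z / X) *: x m by rewrite /dir scalerA.
  have -> : z m - (Z / X) *: x m = (z m - x m) + (1 - Z / X) *: x m.
    by rewrite scalerBl scale1r addrA subrK.
  apply: le_trans (enormD _ _) _; rewrite enormZ -/D -/X.
  have -> : `|1 - Z / X| * X = `|X - Z|.
    by rewrite -[X in _ * X]ger0_norm ?(ltW X0) // -normrM mulrBl mul1r divfK ?gt_eqF.
  have := enorm_dist (x m) (z m); rewrite -/X -/Z.
  have -> : enorm (x m - z m) = D by rewrite /D -enormN opprB.
  lra.
have q0 := enorm_ge0 (dir (z m) - dir (x m)).
set q := enorm (dir (z m) - dir (x m)) in key q0.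
have hq : q <= e / 4.
  have : q * ((1 - t) * X) <= 2 * (t * X) by nra.
  move=> hh.
  have hh' : q * (1 - t) <= 2 * t.
    by rewrite -(ler_pM2r X0) -mulrA; apply: le_trans hh _; rewrite mulrA.
  have : q * (1 - t) * (e + 8) <= 2 * t * (e + 8) by rewrite ler_pM2r ?addr_gt0.
  rewrite -mulrA mulrBl mul1r te -mulrA te; nra.
have := enormD (dir (z m) - dir (x m)) (dir (x m) - d).
rewrite addrA subrK -/q; lra.
Qed.
End S.
Section M.
Variable R : realType.
Variable n : nat.
Variable h : 'rV[R]_n -> 'rV[R]_n.

Lemma graph_lr S x : graph S h x ->
  x = row_mx (lsubmx x) (h (lsubmx x)) /\ S (lsubmx x).
Proof. by move=> [y [Sy ->]]; rewrite row_mxKl. Qed.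

Lemma lsub_close (v w : 'rV[R]_(n + n)) : enorm (lsubmx v - lsubmx w) <= enorm (v - w).
Proof. by rewrite -linearB enorm_lsub. Qed.

Lemma dist_sym k (v w : 'rV[R]_k) : enorm (v - w) = enorm (w - v).
Proof. by rewrite -enormN opprB. Qed.

Lemma kappa (r c2 : R) S d : 0 < r -> 0 <= c2 ->
  (forall x, ball0 r x -> enorm (h x) <= c2 * enorm x) ->
  tangent_dirs (graph S h) d -> 0 < enorm (lsubmx d).
Proof.
move=> r0 c20 Hc [sd [x [Hx [Hx0 Hd]]]].
set c := 1 / (2 + 2 * c2).
have p2 : 0 < 2 + 2 * c2 by lra.
have c0 : 0 < c by rewrite divr_gt0.
have cc : c * (2 + 2 * c2) = 1 by rewrite /c divfK // gt_eqF.
have [m [Hm1 Hm2]] := ev_ex (evA (cvg0_ev Hx0 r0) (cvgto_ev Hd c0)).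
have [Ex _] := graph_lr (proj1 (Hx m)).
set y := lsubmx (x m) in Ex.
have yr : ball0 r y by rewrite /ball0; apply: le_lt_trans (enorm_lsub _) Hm1.
have hy := Hc _ yr.
set N := enorm (x m).
have N0 : 0 < N.
  rewrite lt_def enorm_ge0 andbT; apply/eqP => /enorm_eq0 /eqP.
  by rewrite (negbTE (proj2 (Hx m))).
have NB : N <= enorm y + enorm (h y) by rewrite /N {1}Ex enorm_row_le.
set w := lsubmx (dir (x m)).
have Ew : N * enorm w = enorm y.
  rewrite /w /dir linearZ /= enormZ ger0_norm ?invr_ge0 ?enorm_ge0 //.
  by rewrite mulrA divff ?gt_eqF // mul1r.
have Hw : 1 <= (1 + c2) * enorm w by nra.
have Hwd : enorm (w - lsubmx d) < c by apply: le_lt_trans (lsub_close _ _) Hm2.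
have := enormB w (lsubmx d); nra.
Qed.

Lemma parallel S a d : sphere a ->
  (forall x, S x -> exists t, 0 <= t /\ x = t *: a) ->
  tangent_dirs (graph S h) d -> lsubmx d = enorm (lsubmx d) *: a.
Proof.
move=> sa HS [sd [x [Hx [Hx0 Hd]]]].
apply/eqP; rewrite -subr_eq0; apply/eqP; apply: enorm_eq0.
apply: zero_of_small; first exact: enorm_ge0.
move=> e e0.
have e2 : 0 < e / 2 by rewrite divr_gt0.
have [m Hm] := ev_ex (cvgto_ev Hd e2).
have [_ Sy] := graph_lr (proj1 (Hx m)).
have [t [t0 Et]] := HS _ Sy.
set w := lsubmx (dir (x m)).
have Ew : w = (enorm (x m))^-1 * t *: a by rewrite /w /dir linearZ /= Et scalerA.
have wd : enorm (w - lsubmx d) < e / 2 by apply: le_lt_trans (lsub_close _ _) Hm.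
have nw : enorm w = (enorm (x m))^-1 * t.
  rewrite Ew enormZ sa mulr1 ger0_norm // mulr_ge0 // invr_ge0 enorm_ge0 //.
have E2 : enorm (w - enorm (lsubmx d) *: a) <= enorm (w - lsubmx d).
  rewrite {1}Ew -scalerBl enormZ sa mulr1 -nw; exact: enorm_dist.
have := enormD (lsubmx d - w) (w - enorm (lsubmx d) *: a).
rewrite addrA subrK dist_sym; lra.
Qed.
End M.
Section M2.
Variable R : realType.
Variable n : nat.
Variable h : 'rV[R]_n -> 'rV[R]_n.

Lemma rowmx_sub (x1 x2 y1 y2 : 'rV[R]_n) :
  row_mx x1 y1 - row_mx x2 y2 = row_mx (x1 - x2) (y1 - y2).
Proof. by rewrite opp_row_mx add_row_mx. Qed.

Lemma tangent_line (r c2 rL Lp : R) d : 0 < r -> 0 <= c2 ->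
  (forall x, ball0 r x -> enorm (h x) <= c2 * enorm x) ->
  0 < rL -> 0 < Lp ->
  (forall x y, ball0 rL x -> ball0 rL y -> enorm (h x - h y) <= Lp * enorm (x - y)) ->
  h 0 = 0 ->
  tangent_dirs (graph (fun _ => True) h) d ->
  tangent_dirs (graph (semiline (dir (lsubmx d))) h) d.
Proof.
move=> r0 c20 Hc rL0 Lp0 HL h0 Ht.
have k0 := kappa r0 c20 Hc Ht.
move: Ht => [sd [x [Hx [Hx0 Hd]]]].
set d1 := lsubmx d in k0 *; set al := dir d1.
have nd1 : d1 != 0 by apply/eqP => E; move: k0; rewrite E enorm0 ltxx.
have sal : enorm al = 1 by apply: enorm_dir.
pose s m := enorm (lsubmx (x m)).
pose z m := row_mx (s m *: al) (h (s m *: al)).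
have Key : negl (fun m => z m - x m) x.
  apply: (@negl_C _ _ _ _ (2 * (1 + Lp))); first by lra.
  move=> e e0; apply: evW (evA (cvgto_ev Hd e0) (cvg0_ev Hx0 rL0)) => m [H1 H2].
  have [Ex _] := graph_lr (proj1 (Hx m)).
  set y := lsubmx (x m) in Ex.
  set N := enorm (x m) in H2 *.
  set w := lsubmx (dir (x m)).
  have Ey : y = N *: w by rewrite /y /w {1}(dirK (x m)) linearZ.
  have N0 : 0 <= N := enorm_ge0 _.
  have Es : s m = N * enorm w by rewrite /s -/y Ey enormZ ger0_norm.
  have B1 : enorm (s m *: al - y) <= 2 * e * N.
    have -> : s m *: al - y = N *: (enorm w *: al - w).
      by rewrite Es Ey scalerBr -scalerA.
    rewrite enormZ ger0_norm //.
    have := para_bound w nd1.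
    have : enorm (w - d1) < e by apply: le_lt_trans (lsub_close _ _) H1.
    move: (enorm_ge0 (enorm w *: al - w)) => ? ? ?; nra.
  have yr : enorm y < rL by apply: le_lt_trans (enorm_lsub _) H2.
  have sr : ball0 rL (s m *: al) by rewrite /ball0 enormZ sal mulr1 ger0_norm ?enorm_ge0.
  have Ez : z m - x m = row_mx (s m *: al - y) (h (s m *: al) - h y).
    by rewrite /z {1}Ex rowmx_sub.
  have := HL _ _ sr yr.
  have := enorm_row_le (s m *: al - y) (h (s m *: al) - h y).
  rewrite -Ez.
  move: (enorm_ge0 (s m *: al - y)) => ? ? ?; nra.
split=> //; exists z; split; last split.
- move=> m; split.
    exists (s m *: al); split=> //; exists (s m); split=> //; exact: enorm_ge0.
  apply/eqP => Hz.
  have : lsubmx (z m) = 0 by rewrite Hz linear0.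
  rewrite row_mxKl => /eqP; rewrite scaler_eq0 (negbTE (_ : al != 0)); last first.
    by apply/eqP => E; move: sal; rewrite E enorm0 => /eqP; rewrite eq_sym oner_eq0.
  rewrite orbF => /eqP /enorm_eq0 E.
  have [Ex _] := graph_lr (proj1 (Hx m)).
  by move: (proj2 (Hx m)); rewrite Ex E h0 row_mx0 eqxx.
- exact: negl_cvg0 Key Hx0.
- apply: dir_close Key Hd => m; exact: proj2 (Hx m).
Qed.
End M2.
Section M3.
Variable R : realType.
Variable n : nat.
Variable h : 'rV[R]_n -> 'rV[R]_n.

Lemma fwd (r c2 rL Lp : R) al : 0 < r -> 0 <= c2 ->
  (forall x, ball0 r x -> enorm (h x) <= c2 * enorm x) ->
  0 < rL -> 0 < Lp ->
  (forall x y, ball0 rL x -> ball0 rL y -> enorm (h x - h y) <= Lp * enorm (x - y)) ->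
  SSP_map (fun _ => True) h -> sphere al -> SSP_map (semiline al) h.
Proof.
move=> r0 c20 Hc rL0 Lp0 HL Hssp sa a a0 [d [Ht Had]].
have Ht' : tangent_dirs (graph (fun _ => True) h) d.
  move: (Ht) => [sd [x [Hx [Hx0 Hd]]]]; split=> //; exists x; split=> // m.
  split; last exact: proj2 (Hx m).
  by move: (proj1 (Hx m)) => [y [_ Ey]]; exists y.
have [b [Hb [Hab _]]] := Hssp a a0 (ex_intro _ d (conj Ht' Had)).
set d1 := lsubmx d.
have par : d1 = enorm d1 *: al by apply: (parallel (h := h) sa _ Ht) => x [t Ht0]; exists t.
have d1le : enorm d1 <= 1 by apply: le_trans (enorm_lsub d) _; rewrite (proj1 Ht).
have d1ge : 0 <= enorm d1 := enorm_ge0 _.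
pose b' m := row_mx (enorm (a m) *: d1) (h (enorm (a m) *: d1)).
exists b'; suff Key : negl (fun m => a m - b' m) a.
  split; last by split=> //; apply: negl_swap.
  move=> m; exists (enorm (a m) *: d1); split=> //.
  exists (enorm (a m) * enorm d1); split; first by rewrite mulr_ge0 ?enorm_ge0.
  by rewrite {1}par scalerA.
apply: (@negl_C _ _ _ _ (3 + 2 * Lp)); first by lra.
move=> e e0.
have rL2 : 0 < rL / 2 by rewrite divr_gt0.
have rLh : rL / 2 * 2 = rL by rewrite divfK // gt_eqF // ltr0Sn.
apply: evW (evA (evA (Hab e e0) (Hab 1 ltr01)) (evA (cvgto_ev Had e0) (cvg0_ev a0 rL2))).
move=> m [[H1 H2] [H3 H4]]; rewrite /= in H1 H2.
set A := enorm (a m) in H1 H2 H4 *.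
have A0 : 0 <= A := enorm_ge0 _.
have [Eb _] := graph_lr (Hb m).
set x := lsubmx (b m) in Eb.
set u := A *: d1.
have nu : enorm u = A * enorm d1 by rewrite /u enormZ ger0_norm.
have ur : ball0 rL u by rewrite /ball0 nu; nra.
have Bb : enorm (b m) <= 2 * A.
  have := enormD (b m - a m) (a m); rewrite subrK dist_sym -/A; lra.
have xr : ball0 rL x by rewrite /ball0; apply: le_lt_trans (enorm_lsub _) _; lra.
have X1 : enorm (x - lsubmx (a m)) <= e * A.
  by apply: le_trans (lsub_close _ _) _; rewrite dist_sym.
have X2 : enorm (lsubmx (a m) - u) <= e * A.
  have -> : lsubmx (a m) - u = A *: (lsubmx (dir (a m)) - d1).
    by rewrite {1}(dirK (a m)) linearZ scalerBr.
  rewrite enormZ ger0_norm //.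
  have : enorm (lsubmx (dir (a m)) - d1) < e by apply: le_lt_trans (lsub_close _ _) H3.
  move: (enorm_ge0 (lsubmx (dir (a m)) - d1)) => ? ?; nra.
have X3 : enorm (x - u) <= 2 * e * A.
  have := enormD (x - lsubmx (a m)) (lsubmx (a m) - u); rewrite addrA subrK; lra.
have Ebb : b m - b' m = row_mx (x - u) (h x - h u) by rewrite /b' {1}Eb rowmx_sub.
have X4 : enorm (b m - b' m) <= (1 + Lp) * (2 * e * A).
  rewrite Ebb; apply: le_trans (enorm_row_le _ _) _.
  have := HL _ _ xr ur; move: (enorm_ge0 (x - u)) => ? ?; nra.
have := enormD (a m - b m) (b m - b' m); rewrite addrA subrK; nra.
Qed.
End M3.

Theorem proposition4p9 (R : realType) (n : nat) (h : 'rV[R]_n -> 'rV[R]_n) :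
  homeo_germ h ->
  lipschitz_germ h ->
  (exists c1 c2 r : R, 0 < c1 /\ 0 < c2 /\ 0 < r /\
     forall x, ball0 r x -> c1 * enorm x <= enorm (h x) /\ enorm (h x) <= c2 * enorm x) ->
  (SSP_map (fun _ : 'rV[R]_n => True) h <->
   forall a : 'rV[R]_n, sphere a -> SSP_map (semiline a) h).
Proof.
move=> [h0 _] [rL [L [rL0 HL]]] [c1 [c2 [r [_ [c20 [r0 Hcb]]]]]].
have Hc : forall x, ball0 r x -> enorm (h x) <= c2 * enorm x by move=> x /Hcb [].
have Lp0 : 0 < `|L| + 1 by rewrite ltr_pwDr.
have HL' : forall x y, ball0 rL x -> ball0 rL y ->
    enorm (h x - h y) <= (`|L| + 1) * enorm (x - y).
  move=> x y Hx Hy; apply: le_trans (HL _ _ Hx Hy) _.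
  apply: ler_wpM2r; first exact: enorm_ge0.
  by apply: le_trans (ler_norm L) _; rewrite lerDl.
split.
  by move=> Hs al sa; apply: (fwd r0 (ltW c20) Hc rL0 Lp0 HL' Hs sa).
move=> Hl a a0 [d [Ht Had]].
have Ht2 := tangent_line r0 (ltW c20) Hc rL0 Lp0 HL' h0 Ht.
have k0 := kappa r0 (ltW c20) Hc Ht.
have sal : sphere (dir (lsubmx d)).
  apply: enorm_dir; apply/eqP => E; move: k0; rewrite E enorm0 ltxx.
  done.
have [b [Hb Hab]] := Hl _ sal a a0 (ex_intro _ d (conj Ht2 Had)).
exists b; split=> // m.
by move: (Hb m) => [y [_ Ey]]; exists y.
Qed.
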